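(* Let $s=\tfrac12$ and $\lambda\in\mathbb{C}$. The space of even superderivations of $\mathfrak{L}^{1/2}_\lambda$ of degree $0$ equals $$\mathrm{span}_{\mathbb{C}}\{\mathrm{ad}\,L_0,\ \mathrm{ad}\,I_0\}\oplus\mathbb{C}\,\partial_G\oplus\delta_{\lambda,0}\,\mathbb{C}\,\partial_D,$$ where the last summand is $\mathbb{C}\partial_D$ if $\lambda=0$ and $\{0\}$ if $\lambda\neq0$. In particular $\partial_G$ is a superderivation for every $\lambda$, and $\partial_D$ is a superderivation when $\lambda=0$.
   Context: For $s\in\{0,\tfrac12\}$ and $\lambda\in\mathbb{C}$, $\mathfrak{L}^s_\lambda$ is the complex Lie superalgebra with basis $\{L_m,I_m,G_p,H_p : m\in\mathbb{Z},\ p\in s+\mathbb{Z}\}$, even part spanned by the $L_m,I_m$, odd part spanned by the $G_p,H_p$, and brackets $[L_m,L_n]=(m-n)L_{m+n}$, $[L_m,I_n]=(m-n)I_{m+n}$, $[L_m,H_p]=(\tfrac m2-p)H_{m+p}$, $[L_m,G_p]=(\tfrac m2-p)G_{m+p}+\lambda(m+1)H_{m+p}$, $[I_m,G_p]=(m-2p)H_{m+p}$, $[G_p,G_q]=I_{p+q}$, plus those given by super-antisymmetry $[y,x]=-(-1)^{|x||y|}[x,y]$; all other brackets of basis elements are zero. $\mathfrak{L}_r$ is spanned by basis elements of index $r$. A superderivation of parity $a$ is a linear map $D$ shifting parity by $a$ with $D([x,y])=[D(x),y]+(-1)^{a|x|}[x,D(y)]$; it has degree $r$ if $D(\mathfrak{L}_q)\subset\mathfrak{L}_{q+r}$.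 $\mathrm{ad}\,x(y)=[x,y]$. The linear maps $\partial_G,\partial_D$ (called $\partial_4,\partial_3$ in the paper for $s=\tfrac12$) are defined by $\partial_G(L_m)=\partial_G(I_m)=\partial_G(H_p)=0$, $\partial_G(G_p)=H_p$; $\partial_D(L_m)=0$, $\partial_D(I_m)=2I_m$, $\partial_D(G_p)=G_p$, $\partial_D(H_p)=3H_p$. *)

(* Defs.v *)
From HB Require Import structures.
From mathcomp Require Import all_boot all_order all_algebra.
Set Implicit Arguments. Unset Strict Implicit. Unset Printing Implicit Defensive.
Import Order.TTheory GRing.Theory Num.Theory.
Local Open Scope ring_scope.

(* Basis of L^{1/2}_lambda.  bL m = L_m, bI m = I_m (m : int);
   bG n = G_{n+1/2}, bH n = H_{n+1/2} (n : int), i.e. p = n + 1/2. *)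
Inductive basis := bL of int | bI of int | bG of int | bH of int.

Definition basis_enc (b : basis) : nat * int :=
  match b with bL m => (0%N, m) | bI m => (1%N, m) | bG n => (2%N, n) | bH n => (3%N, n) end.
Definition basis_dec (x : nat * int) : basis :=
  match x with (0, m) => bL m | (1, m) => bI m | (2, m) => bG m | (_, m) => bH m end%N.
Lemma basis_encK : cancel basis_enc basis_dec. Proof. by case. Qed.
HB.instance Definition _ := Equality.copy basis (can_type basis_encK).

(* parity: false = even (L, I), true = odd (G, H) *)
Definition par (b : basis) : bool :=
  match b with bL _ | bI _ => false | bG _ | bH _ => true end.

Definition idx (b : basis) : rat :=
  match b with
  | bL m | bI m => m%:~R
  | bG n | bH n => n%:~R + 2^-1
  end.

(* Elements of the algebra: finite formal linear combinations of basis
   elements; two combinations are equal iff their coefficients agree. *)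
Definition vec (C : nzRingType) := seq (C * basis).
Definition coef (C : nzRingType) (v : vec C) (z : basis) : C :=
  \sum_(x <- v) x.1 * (x.2 == z)%:R.
Definition vscale (C : nzRingType) (k : C) (v : vec C) : vec C :=
  [seq (k * x.1, x.2) | x <- v].

(* Brackets of basis elements, as given in the paper (s = 1/2),
   completed by super-antisymmetry; all other brackets are 0. *)
Definition br (C : fieldType) (lam : C) (x y : basis) : vec C :=
  let hp (n : int) : C := n%:~R + 2^-1 in
  match x, y with
  | bL m, bL n => [:: ((m - n)%:~R, bL (m + n))]
  | bL m, bI n => [:: ((m - n)%:~R, bI (m + n))]
  | bI n, bL m => [:: (- (m - n)%:~R, bI (m + n))]
  | bL m, bH n => [:: (m%:~R / 2%:R - hp n, bH (m + n))]
  | bH n, bL m => [:: (- (m%:~R / 2%:R - hp n), bH (m + n))]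
  | bL m, bG n => [:: (m%:~R / 2%:R - hp n, bG (m + n));
                      (lam * (m%:~R + 1), bH (m + n))]
  | bG n, bL m => [:: (- (m%:~R / 2%:R - hp n), bG (m + n));
                      (- (lam * (m%:~R + 1)), bH (m + n))]
  | bI m, bG n => [:: (m%:~R - 2%:R * hp n, bH (m + n))]
  | bG n, bI m => [:: (- (m%:~R - 2%:R * hp n), bH (m + n))]
  | bG n1, bG n2 => [:: (1, bI (n1 + n2 + 1))]
  | _, _ => [::]
  end.

Definition brl (C : fieldType) (lam : C) (s t : vec C) : vec C :=
  flatten [seq vscale (x.1 * y.1) (br lam x.2 y.2) | x <- s, y <- t].

Definition lmap (C : nzRingType) := basis -> vec C.
Definition lapply (C : nzRingType) (D : lmap C) (v : vec C) : vec C :=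
  flatten [seq vscale x.1 (D x.2) | x <- v].
Definition lmap_eq (C : nzRingType) (D1 D2 : lmap C) : Prop :=
  forall b z, coef (D1 b) z = coef (D2 b) z.
Definition lzero (C : nzRingType) : lmap C := fun _ => [::].
Definition ladd (C : nzRingType) (D1 D2 : lmap C) : lmap C := fun b => D1 b ++ D2 b.
Definition lscale (C : nzRingType) (k : C) (D : lmap C) : lmap C := fun b => vscale k (D b).

Definition ad (C : fieldType) (lam : C) (x : basis) : lmap C := fun b => br lam x b.

(* superderivation of parity a (checked on basis elements, which are
   homogeneous; this is equivalent to the condition on all homogeneous
   elements by bilinearity). *)
Definition superder (C : fieldType) (lam : C) (a : bool) (D : lmap C) : Prop :=
  (forall b z, coef (D b) z != 0 -> par z = par b (+) a) /\
  (forall x y : basis,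
     forall z, coef (lapply D (br lam x y)) z =
       coef (brl lam (D x) [:: (1, y)] ++
             vscale ((-1) ^+ (a && par x)) (brl lam [:: (1, x)] (D y))) z).

Definition has_degree (C : nzRingType) (r : rat) (D : lmap C) : Prop :=
  forall b z, coef (D b) z != 0 -> idx z = idx b + r.

Definition dG (C : nzRingType) : lmap C := fun b =>
  match b with bG n => [:: (1, bH n)] | _ => [::] end.
Definition dD (C : nzRingType) : lmap C := fun b =>
  match b with
  | bL _ => [::]
  | bI m => [:: (2%:R, bI m)]
  | bG n => [:: (1, bG n)]
  | bH n => [:: (3%:R, bH n)]
  end.
Arguments dG {C}.
Arguments dD {C}.
Arguments lzero {C}.

(* Main.v *)
Require Import Defs.
From HB Require Import structures.
From mathcomp Require Import all_boot all_order all_algebra.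
From mathcomp Require Import ring zify.
Set Implicit Arguments. Unset Strict Implicit. Unset Printing Implicit Defensive.
Import Order.TTheory GRing.Theory Num.Theory.
Local Open Scope ring_scope.

Section Machinery.
Variable C : fieldType.

Definition lin (F : basis -> C) (v : vec C) : C := \sum_(x <- v) x.1 * F x.2.

Lemma coef_lin (v : vec C) z : coef v z = lin (fun w => (w == z)%:R) v.
Proof. by []. Qed.

Lemma lin_cat F (v w : vec C) : lin F (v ++ w) = lin F v + lin F w.
Proof. by rewrite /lin big_cat. Qed.

Lemma lin_vscale F k (v : vec C) : lin F (vscale k v) = k * lin F v.
Proof. by rewrite /lin /vscale big_map mulr_sumr; apply: eq_bigr => x _ /=; rewrite mulrA. Qed.

Lemma lin_flatten F (vs : seq (vec C)) : lin F (flatten vs) = \sum_(v <- vs) lin F v.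
Proof. by rewrite /lin big_flatten. Qed.

Lemma coef_cat (v w : vec C) z : coef (v ++ w) z = coef v z + coef w z.
Proof. by rewrite !coef_lin lin_cat. Qed.

Lemma coef_vscale k (v : vec C) z : coef (vscale k v) z = k * coef v z.
Proof. by rewrite !coef_lin lin_vscale. Qed.

Lemma coef_lapply (D : lmap C) v z : coef (lapply D v) z = lin (fun w => coef (D w) z) v.
Proof.
rewrite /lapply coef_lin lin_flatten big_map [RHS]/lin; apply: eq_bigr => x _.
by rewrite lin_vscale.
Qed.

Lemma coef_brl lam (s t : vec C) z :
  coef (brl lam s t) z = lin (fun w => lin (fun u => coef (br lam w u) z) t) s.
Proof.
rewrite /brl coef_lin lin_flatten big_allpairs_dep [RHS]/lin.
apply: eq_bigr => x _; rewrite [in RHS]/lin mulr_sumr; apply: eq_bigr => y _.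
by rewrite lin_vscale -coef_lin mulrA.
Qed.

Lemma sum_pick (U : seq basis) a (G : basis -> C) : uniq U -> a \in U ->
  \sum_(z <- U) (a == z)%:R * G z = G a.
Proof.
move=> uU aU; rewrite (big_rem a aU) /= eqxx mul1r big1_seq ?addr0 // => z /= zU.
have := mem_rem_uniq a uU z; rewrite zU /= => /esym/andP[nz _].
by rewrite eq_sym (negbTE nz) mul0r.
Qed.

Lemma lin_U F (v : vec C) (U : seq basis) : uniq U -> all (fun x => x.2 \in U) v ->
  lin F v = \sum_(z <- U) coef v z * F z.
Proof.
move=> uU; elim: v => [|x v IH] /=.
  by move=> _; rewrite /lin big_nil big1 // => z _; rewrite /coef big_nil mul0r.
case/andP=> xU /IH {}IH.
rewrite /lin big_cons -/(lin F v) IH.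
rewrite /coef.
under eq_bigr do rewrite big_cons mulrDl.
rewrite big_split /=; congr (_ + _).
by rewrite -(sum_pick F uU xU) mulr_sumr; apply: eq_bigr => z _; rewrite mulrA.
Qed.

Lemma lin_ext F (v w : vec C) : (forall z, coef v z = coef w z) -> lin F v = lin F w.
Proof.
move=> e; set U := undup (map snd (v ++ w)).
have uU : uniq U by exact: undup_uniq.
rewrite (@lin_U F v U uU) ?(@lin_U F w U uU).
- by apply: eq_bigr => z _; rewrite e.
- by apply/allP => x xw; rewrite mem_undup map_cat mem_cat; apply/orP; right; apply: map_f.
- by apply/allP => x xw; rewrite mem_undup map_cat mem_cat; apply/orP; left; apply: map_f.
Qed.

Lemma superder_eq lam a (D D' : lmap C) : lmap_eq D D' -> superder lam a D -> superder lam a D'.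
Proof.
move=> e [H1 H2]; split.
  by move=> b z; rewrite -e; apply: H1.
move=> x y z; have := H2 x y z.
rewrite !coef_cat !coef_vscale !coef_lapply !coef_brl.
have -> : lin (fun w => coef (D w) z) (br lam x y) = lin (fun w => coef (D' w) z) (br lam x y).
  by apply: eq_bigr => w _; rewrite e.
move=> ->; congr (_ + _ * _).
  by apply: lin_ext => w; rewrite e.
by apply: eq_bigr => w _; congr (_ * _); apply: lin_ext => u; rewrite e.
Qed.

Lemma has_degree_eq r (D D' : lmap C) : lmap_eq D D' -> has_degree r D -> has_degree r D'.
Proof. by move=> e H b z; rewrite -e; apply: H. Qed.

Lemma lmap_eq_trans (D1 D2 D3 : lmap C) : lmap_eq D1 D2 -> lmap_eq D2 D3 -> lmap_eq D1 D3.
Proof. by move=> e1 e2 b z; rewrite e1 e2. Qed.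
Lemma lmap_eq_sym (D1 D2 : lmap C) : lmap_eq D1 D2 -> lmap_eq D2 D1.
Proof. by move=> e b z; rewrite e. Qed.

End Machinery.


Lemma basis_eqE (x y : basis) : (x == y) = (basis_enc x == basis_enc y).
Proof. by []. Qed.

Ltac simp := rewrite /coef ?big_cons ?big_nil /= ?basis_eqE /= ?xpair_eqE /=.

Section Canon.
Variable C : fieldType.
Implicit Types f g k h al be ga de : int -> C.

Definition Dcan f g k h al be ga de : lmap C := fun b =>
  match b with
  | bL m => [:: (f m, bL m); (g m, bI m)]
  | bI m => [:: (k m, bL m); (h m, bI m)]
  | bG n => [:: (al n, bG n); (be n, bH n)]
  | bH n => [:: (ga n, bG n); (de n, bH n)]
  end.

Lemma canon (D : lmap C) :
  (forall b z, coef (D b) z != 0 -> par z = par b (+) false) ->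
  has_degree 0 D ->
  lmap_eq D (Dcan (fun m => coef (D (bL m)) (bL m)) (fun m => coef (D (bL m)) (bI m))
                  (fun m => coef (D (bI m)) (bL m)) (fun m => coef (D (bI m)) (bI m))
                  (fun m => coef (D (bG m)) (bG m)) (fun m => coef (D (bG m)) (bH m))
                  (fun m => coef (D (bH m)) (bG m)) (fun m => coef (D (bH m)) (bH m))).
Proof.
move=> Hp Hd b z.
have Hi : forall m j, (j%:~R : rat) = m%:~R + 0 -> m = j.
  by move=> m j; rewrite addr0 => /intr_inj.
have Hh : forall m j, (j%:~R + 2^-1 : rat) = (m%:~R + 2^-1) + 0 -> m = j.
  by move=> m j; rewrite addr0 => /addIr /intr_inj.
case: b => m; case: z => j /=;
  (rewrite [in RHS]/coef ?big_cons ?big_nil /= ?basis_eqE /= ?xpair_eqE /=);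
  (try (case: (eqVneq m j) => [<-|nmj]));
  rewrite ?eqxx ?mulr1 ?mulr0 ?addr0 ?add0r ?(negbTE nmj) ?mulr0 ?addr0 //;
  apply/eqP; apply/negPn/negP => /[dup] /Hp /= // _ /Hd /=.
all: try (move/Hi; by move/eqP: nmj).
all: try (move/Hh; by move/eqP: nmj).
Qed.

End Canon.


Ltac ev E := move: E; rewrite coef_cat coef_vscale coef_lapply !coef_brl /lin; simp; rewrite ?eqxx /=.

Section Fwd.
Variable C : numFieldType.

Lemma solve_lin (c X Y P Q e : C) : c != 0 -> e = 0 -> P = Q -> P - Q = c * (X - Y) + e -> X = Y.
Proof.
move=> nc -> PQ; rewrite PQ subrr addr0 => /esym /eqP.
by rewrite mulf_eq0 (negbTE nc) /= subr_eq0 => /eqP.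
Qed.

Lemma int_step (F : int -> C) c : (forall k, F (k + 1) = F k + c) -> forall n, F n = F 0 + n%:~R * c.
Proof.
move=> st; case=> p.
  elim: p => [|p IH]; first by rewrite mul0r addr0.
  have -> : Posz p.+1 = Posz p + 1 by lia.
  by rewrite st IH intrD mulrDl mul1r addrA.
rewrite NegzE; elim: p => [|p IH].
  have := st (-1); rewrite (_ : -1 + 1 = 0) // => ->.
  by rewrite (_ : - (Posz 1) = -1) // mulN1r addrK.
have := st (- Posz p.+2); rewrite (_ : - Posz p.+2 + 1 = - Posz p.+1); last by lia.
rewrite IH => /eqP; rewrite -subr_eq => /eqP <-.
rewrite (_ : - Posz p.+2 = - Posz p.+1 - 1); last by lia.
rewrite intrD; ring.
Qed.

Lemma addit (F : int -> C) : (forall m n, m != n -> F (m + n) = F m + F n) ->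
  forall x, F x = x%:~R * F 1.
Proof.
move=> A.
have F0 : F 0 = 0.
  have E := A 1 0 isT; rewrite addr0 in E.
  apply: (solve_lin (c:=-1) (e:=0) _ (erefl 0) E); [by rewrite oppr_eq0 oner_eq0| ring].
have Fm1 : F (-1) = - F 1.
  have E := A 1 (-1) isT; rewrite subrr F0 in E.
  apply: (solve_lin (c:=-1) (e:=0) _ (erefl 0) E); [by rewrite oppr_eq0 oner_eq0| ring].
have F2 : F 2 = F 1 + F 1.
  have E := A 2 (-1) isT; rewrite (_ : 2 + -1 = 1) // Fm1 in E.
  apply: (solve_lin (c:=-1) (e:=0) _ (erefl 0) E); [by rewrite oppr_eq0 oner_eq0| ring].
have st : forall k, F (k + 1) = F k + F 1.
  move=> k; case: (eqVneq k 1) => [->|nk]; first by rewrite F2.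
  exact: A.
by move=> x; rewrite (int_step st) F0 add0r.
Qed.

Lemma pp_neq0 (n : int) : (n%:~R + 2^-1 : C) != 0.
Proof.
have -> : (n%:~R + 2^-1 : C) = (2 * n + 1)%:~R / 2.
  rewrite intrD intrM /=; by field.
rewrite mulf_eq0 invr_eq0 pnatr_eq0 orbF intr_eq0; apply/eqP; lia.
Qed.

End Fwd.


Ltac sl c E nz := first [ apply: (solve_lin (c:=c) (e:=0) nz (erefl 0) E); by field
  | apply: (solve_lin (c:=-c) (e:=0) _ (erefl 0) E); [by rewrite oppr_eq0 | by field] ].

Section Fwd2.
Variable C : numFieldType.

Lemma intr_neq0 (m : int) : m != 0 -> (m%:~R : C) != 0.
Proof. by rewrite intr_eq0. Qed.

Lemma forward (lam : C) f g k h al be ga de : superder lam false (Dcan f g k h al be ga de) ->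
  exists f1 g1 h0 de0 be0, lam * h0 = 0 /\ (forall m, f m = m%:~R * f1) /\
   (forall m, g m = m%:~R * g1) /\ (forall m, k m = 0) /\ (forall m, h m = h0 + m%:~R * f1) /\
   (forall n, al n = de0 + n%:~R * f1 - h0) /\ (forall n, be n = be0 + n%:~R * (2 * g1)) /\
   (forall n, ga n = 0) /\ (forall n, de n = de0 + n%:~R * f1) /\ h0 + f1 = 2 * de0 - 2 * h0.
Proof.
move=> [_ H].
have Ef : forall m, f m = m%:~R * f 1.
  apply: addit => m n mn; have E := H (bL m) (bL n) (bL (m + n)); ev E => E.
  have nz : ((m - n)%:~R : C) != 0 by apply: intr_neq0; rewrite subr_eq0.
  sl ((m - n)%:~R : C) E nz.
move: (f 1) Ef => f1 Ef.
have Eg : forall m, g m = m%:~R * g 1.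
  apply: addit => m n mn; have E := H (bL m) (bL n) (bI (m + n)); ev E => E.
  have nz : ((m - n)%:~R : C) != 0 by apply: intr_neq0; rewrite subr_eq0.
  rewrite [n + m]addrC eqxx /= in E; sl ((m - n)%:~R : C) E nz.
move: (g 1) Eg => g1 Eg.
have Ek1 : forall x, x != 0 -> k x = k 0.
  move=> x nx; have E := H (bL x) (bI 0) (bL (x + 0)); ev E; rewrite !addr0 => E.
  have nz : ((x - 0)%:~R : C) != 0 by apply: intr_neq0; rewrite subr0.
  sl ((x - 0)%:~R : C) E nz.
have Ek0 : k 0 = 0.
  have E := H (bI 1) (bI 0) (bI (1 + 0)); ev E; rewrite !addr0 Ek1 // => E.
  have nz : (2 : C) != 0 by rewrite pnatr_eq0.
  sl (2 : C) E nz.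
have Ek : forall m, k m = 0.
  by move=> m; case: (eqVneq m 0) => [->|nm]; rewrite ?Ek1.
have Eh : forall x, h x = h 0 + x%:~R * f1.
  move=> x; case: (eqVneq x 0) => [->|nx]; first by rewrite mul0r addr0.
  have E := H (bL x) (bI 0) (bI (x + 0)); ev E; rewrite !addr0 !Ef => E.
  have nz : ((x - 0)%:~R : C) != 0 by apply: intr_neq0; rewrite subr0.
  sl ((x - 0)%:~R : C) E nz.
move: (h 0) Eh => h0 Eh.
have Ega : forall n, ga n = 0.
  move=> n; have E := H (bI 0) (bH n) (bH (0 + n)); ev E; rewrite !add0r Ek => E.
  have nz : (2 * (n%:~R + 2^-1) : C) != 0 by rewrite mulf_neq0 ?pp_neq0 ?pnatr_eq0.
  sl (2 * (n%:~R + 2^-1) : C) E nz.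
have Ede1 : forall x, x != 1 -> de x = f x + de 0.
  move=> x nx; have E := H (bL x) (bH 0) (bH (x + 0)); ev E; rewrite !addr0 !Ega => E.
  have nz : ((x - 1)%:~R / 2 : C) != 0.
    by rewrite mulf_neq0 ?invr_eq0 ?pnatr_eq0 // intr_neq0 // subr_eq0.
  sl ((x - 1)%:~R / 2 : C) E nz.
have Ede : forall x, de x = de 0 + x%:~R * f1.
  move=> x; case: (eqVneq x 1) => [->|nx]; last by rewrite Ede1 // Ef addrC.
  have E := H (bL 2) (bH (-1)) (bH (2 + -1)); ev E; rewrite (_ : 2 + -1 = 1) // !Ega => E.
  rewrite (@Ede1 (-1)) // !Ef in E.
  have nz : (3 / 2 : C) != 0 by rewrite mulf_neq0 ?invr_eq0 ?pnatr_eq0.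
  sl (3 / 2 : C) E nz.
move: (de 0) Ede => de0 Ede.
have Eal : forall n, al n = de0 + n%:~R * f1 - h0.
  move=> n; have E := H (bI 0) (bG n) (bH (0 + n)); ev E; rewrite !add0r !Ek !Ega !Ede !Eh => E.
  have nz : (2 * (n%:~R + 2^-1) : C) != 0 by rewrite mulf_neq0 ?pp_neq0 ?pnatr_eq0.
  sl (2 * (n%:~R + 2^-1) : C) E nz.
have EGG : h0 + f1 = 2 * de0 - 2 * h0.
  have E := H (bG 0) (bG 0) (bI (0 + 0 + 1)); ev E; rewrite ?Ek ?Eh ?Eal => E.
  have nz : (1 : C) != 0 by rewrite oner_eq0.
  sl (1 : C) E nz.
have Elam : lam * h0 = 0.
  have E := H (bL 1) (bG 0) (bH (1 + 0)); ev E; rewrite ?Ek ?Eh ?Eal ?Ede ?Ef ?Eg ?Ega => E.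
  have nz : (2 : C) != 0 by rewrite pnatr_eq0.
  rewrite -[lam * h0]subr0.
  sl (2 : C) E nz.
have Ebe1 : forall n, n != 0 -> be (1 + n) = be n + 2 * g1.
  move=> n nn; have E := H (bL 1) (bG n) (bH (1 + n)); ev E; rewrite ?Ek ?Eh ?Eal ?Ede ?Ef ?Eg ?Ega => E.
  have nz : (n%:~R : C) != 0 by rewrite intr_neq0.
  have E0 : 2 * (lam * h0) = 0 by rewrite Elam mulr0.
  first [apply: (solve_lin (c:=n%:~R) (e:=2 * (lam * h0)) nz E0 E); by field
        | apply: (solve_lin (c:=-n%:~R) (e:=2 * (lam * h0)) _ E0 E); [by rewrite oppr_eq0 | by field]].
have Ebe2 : forall n, n != -1 -> be (-1 + n) = be n - 2 * g1.
  move=> n nn; have E := H (bL (-1)) (bG n) (bH (-1 + n)); ev E; rewrite ?Ek ?Eh ?Eal ?Ede ?Ef ?Eg ?Ega => E.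
  have nz : ((n + 1)%:~R : C) != 0 by rewrite intr_neq0 // addr_eq0.
  sl ((n + 1)%:~R : C) E nz.
have Ebe : forall n, be n = be 0 + n%:~R * (2 * g1).
  apply: int_step => n; case: (eqVneq n 0) => [->|nn]; last by rewrite addrC Ebe1.
  have := Ebe2 1 isT; rewrite (_ : -1 + 1 = 0) // add0r => ->; by rewrite subrK.
exists f1, g1, h0, de0, (be 0); do !split => //.
Qed.
End Fwd2.



Section Targets.
Variable C : numFieldType.
Variable lam a b c d : C.

Definition pp (n : int) : C := n%:~R + 2^-1.

Definition DT : lmap C := Dcan (fun m => - a * m%:~R) (fun m => - b * m%:~R) (fun _ => 0)
  (fun m => - a * m%:~R + 2 * d) (fun n => - a * pp n + d) (fun n => a * lam - 2 * b * pp n + c)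
  (fun _ => 0) (fun n => - a * pp n + 3 * d).

Definition comb : lmap C := ladd (ladd (lscale a (ad lam (bL 0))) (lscale b (ad lam (bI 0))))
                       (ladd (lscale c dG) (lscale d dD)).

Ltac splitj j := repeat match goal with |- context [(?e == j)] =>
   case: (eqVneq e j) => [<-|/negbTE ->] end.

Lemma comb_canon : lmap_eq comb DT.
Proof.
move=> x z; rewrite /comb /DT /ladd /lscale /ad !coef_cat !coef_vscale.
case: x => m; case: z => j; simp; rewrite ?add0r ?addr0; splitj j; rewrite ?eqxx /= /pp; by field.
Qed.

Lemma DT_degree : has_degree 0 DT.
Proof.
move=> x z; case: x => m; case: z => j; simp; rewrite ?mulr0 ?addr0 ?eqxx //.
all: case: (eqVneq m j) => [->|nmj]. all: rewrite ?mulr0 ?addr0 ?mul0r ?eqxx //.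
Qed.

Lemma DT_superder : lam * d = 0 -> superder lam false DT.
Proof.
move=> /eqP; rewrite mulf_eq0 => /orP hd; split.
  move=> x z; case: x => m; case: z => j; simp; rewrite ?mulr0 ?addr0 ?eqxx //.
move=> x y z; rewrite coef_cat coef_vscale coef_lapply !coef_brl /lin.
case: x => m; case: y => n; case: z => j; simp; rewrite ?(addrC n m); splitj j;
  rewrite ?eqxx /= /pp; case: hd => /eqP E; rewrite ?E; by field.
Qed.

End Targets.



Lemma Dcan_ext (C : fieldType) (f g k h al be ga de f' g' k' h' al' be' ga' de' : int -> C) :
  f =1 f' -> g =1 g' -> k =1 k' -> h =1 h' -> al =1 al' -> be =1 be' -> ga =1 ga' -> de =1 de' ->
  lmap_eq (Dcan f g k h al be ga de) (Dcan f' g' k' h' al' be' ga' de').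
Proof.
move=> e1 e2 e3 e4 e5 e6 e7 e8 x z; case: x => m /=;
  by rewrite ?e1 ?e2 ?e3 ?e4 ?e5 ?e6 ?e7 ?e8.
Qed.

Lemma zero_vs (C : fieldType) (v w : vec C) z : coef (vscale 0 v ++ vscale 0 w) z = 0.
Proof. by rewrite coef_cat !coef_vscale !mul0r addr0. Qed.

Theorem lemma2p7 (C : numClosedFieldType) (lam : C) :
  (forall D : lmap C,
     superder lam false D /\ has_degree 0 D <->
     exists a b c d : C, (lam != 0 -> d = 0) /\
       lmap_eq D (ladd (ladd (lscale a (ad lam (bL 0))) (lscale b (ad lam (bI 0))))
                       (ladd (lscale c dG) (lscale d dD)))) /\
  (forall a b c d : C, (lam != 0 -> d = 0) ->
     lmap_eq (ladd (ladd (lscale a (ad lam (bL 0))) (lscale b (ad lam (bI 0))))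
                   (ladd (lscale c dG) (lscale d dD))) lzero ->
     [/\ lmap_eq (ladd (lscale a (ad lam (bL 0))) (lscale b (ad lam (bI 0)))) lzero,
         lmap_eq (lscale c dG) lzero &
         lmap_eq (lscale d dD) lzero]) /\
  superder lam false dG /\
  (lam = 0 -> superder lam false dD).
Proof.
split; [|split; [|split]].
- move=> D; split.
  + case=> [[Hp Hb] Hd].
    have Ec := canon Hp Hd.
    have S := superder_eq Ec (conj Hp Hb).
    have [f1 [g1 [h0 [de0 [be0 [El [Ef [Eg [Ek [Eh [Eal [Ebe [Ega [Ede EGG]]]]]]]]]]]]]] := forward S.
    have Ede0 : de0 = (3 * h0 + f1) / 2.
      have nz : (2 : C) != 0 by rewrite pnatr_eq0.
      sl (2 : C) EGG nz.
    exists (-f1), (-g1), (be0 + f1 * lam - g1), (h0 / 2); split.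
      move=> nl; have -> : h0 = 0 by move/eqP: El; rewrite mulf_eq0 (negbTE nl) => /eqP.
      by rewrite mul0r.
    apply: lmap_eq_trans Ec _; apply: lmap_eq_trans _ (lmap_eq_sym (comb_canon _ _ _ _ _)).
    rewrite /DT; apply: Dcan_ext => m /=;
      rewrite ?Ef ?Eg ?Ek ?Eh ?Eal ?Ebe ?Ega ?Ede ?Ede0 /pp; by field.
  + case=> [a [b [c [d [hd He]]]]].
    have hd' : lam * d = 0.
      by case: (eqVneq lam 0) => [->|/hd ->]; rewrite ?mul0r ?mulr0.
    have E2 := lmap_eq_trans He (comb_canon lam a b c d).
    split; [exact: superder_eq (lmap_eq_sym E2) (DT_superder _ _ _ hd')
           | apply: (has_degree_eq (lmap_eq_sym E2)); apply: DT_degree].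
- move=> a b c d hd He.
  have E2 := lmap_eq_trans (lmap_eq_sym (comb_canon lam a b c d)) He.
  have Ea : a = 0.
    have E := E2 (bL 1) (bL 1); move: E; simp => E.
    have nz : (1 : C) != 0 by rewrite oner_eq0.
    sl (1 : C) E nz.
  have Eb : b = 0.
    have E := E2 (bL 1) (bI 1); move: E; simp => E.
    have nz : (1 : C) != 0 by rewrite oner_eq0.
    sl (1 : C) E nz.
  have Ed : d = 0.
    have E := E2 (bI 0) (bI 0); move: E; simp => E.
    have nz : (2 : C) != 0 by rewrite pnatr_eq0.
    sl (2 : C) E nz.
  have Ec : c = 0.
    have E := E2 (bG 0) (bH 0); move: E; simp; rewrite Ea Eb /pp => E.
    have nz : (1 : C) != 0 by rewrite oner_eq0.
    sl (1 : C) E nz.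
  subst; split => x z; rewrite /ladd /lscale ?zero_vs; simp; rewrite ?coef_vscale /coef ?big_nil //;
    by rewrite big_map big1 // => i _; rewrite mul0r mul0r.
- apply: (superder_eq _ (@DT_superder C lam 0 0 1 0 (mulr0 _))).
  move=> x z; case: x => m; case: z => j; simp; case: (eqVneq m j) => [->|nmj];
    rewrite ?eqxx /= /pp; by field.
- move=> E0; subst lam.
  apply: (superder_eq _ (@DT_superder C 0 0 0 0 1 (mul0r _))).
  move=> x z; case: x => m; case: z => j; simp; case: (eqVneq m j) => [->|nmj];
    rewrite ?eqxx /= /pp; by field.
Qed.
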